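(* Assume $\gamma<\frac14$. If (a) $\rho^s_{in}+\rho^s_{out}<\frac12$ and (b) $|g(S_s\cap\mathcal T_r)-\mu_r|\ge(1-4\gamma)|g(S_s\cap\mathcal T_r)-\mu_s|$ for all $r\ne s$, then $$|g(S_s)-\mu_s|\le 2(1-\rho^s_{out})|g(S_s\cap\mathcal T_s)-\mu_s|+\frac{2}{1-4\gamma}\sum_{r\ne s}\rho^s_{in}(r)|g(S_s\cap\mathcal T_r)-\mu_r|.$$
   Context: Points $x_1,\dots,x_N$ are real numbers, each drawn from one of $\beta$ distributions with distinct means $\mu_1,\dots,\mu_\beta$; $\mathcal T_s$ is the set of points from distribution $s$, $n_s=|\mathcal T_s|$. $\nu_1,\dots,\nu_\beta$ are real cluster centers, $S_r=\{x_i:|x_i-\nu_r|\le|x_i-\nu_s|\ \forall s\}$, and $S_s$ is assumed nonempty. For a nonempty set $S$, $g(S)=\frac1{|S|}\sum_{x\in S}x$ (terms with empty $S_s\cap\mathcal T_r$ have coefficient zero). $\gamma=\max_{s,\,r\ne s}\frac{|\mu_s-\nu_s|}{|\mu_r-\mu_s|}$. $\rho^s_{in}(r)=\frac{|\mathcal T_r\cap S_s|}{n_s}$, $\rho^s_{in}=\sum_{r\ne s}\rho^s_{in}(r)$, $\rho^s_{out}=\frac{\sum_{r\ne s}|\mathcal T_s\cap S_r|}{n_s}$. *)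

(* Defs.v *)
From mathcomp Require Import all_boot all_order all_algebra.
Set Implicit Arguments. Unset Strict Implicit. Unset Printing Implicit Defensive.
Import Order.TTheory GRing.Theory Num.Theory.
Local Open Scope ring_scope.

Section Defs.
Variables (R : realFieldType) (N beta : nat).

(* T_r : indices of the points drawn from distribution r; lab i is the
   distribution of point x_i *)
Definition Tset (lab : 'I_N -> 'I_beta) (r : 'I_beta) : {set 'I_N} :=
  [set i | lab i == r].

(* S_r : Voronoi cell of center nu_r (ties: point lies in every closest cell) *)
Definition Sset (x : 'I_N -> R) (nu : 'I_beta -> R) (r : 'I_beta) : {set 'I_N} :=
  [set i | [forall t, `|x i - nu r| <= `|x i - nu t|]].

(* g(S) = mean of the points in S (equals 0 when S is empty) *)
Definition g (x : 'I_N -> R) (S : {set 'I_N}) : R :=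
  (\sum_(i in S) x i) / (#|S|%:R).

Definition rho_in_r (x : 'I_N -> R) (lab : 'I_N -> 'I_beta) (nu : 'I_beta -> R)
  (s r : 'I_beta) : R :=
  #|Tset lab r :&: Sset x nu s|%:R / #|Tset lab s|%:R.

Definition rho_in (x : 'I_N -> R) (lab : 'I_N -> 'I_beta) (nu : 'I_beta -> R)
  (s : 'I_beta) : R :=
  \sum_(r | r != s) rho_in_r x lab nu s r.

Definition rho_out (x : 'I_N -> R) (lab : 'I_N -> 'I_beta) (nu : 'I_beta -> R)
  (s : 'I_beta) : R :=
  (\sum_(r | r != s) #|Tset lab s :&: Sset x nu r|)%:R / #|Tset lab s|%:R.

Definition gamma (mu nu : 'I_beta -> R) : R :=
  \big[Num.max/0]_(s : 'I_beta) \big[Num.max/0]_(r | r != s)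
     (`|mu s - nu s| / `|mu r - mu s|).
End Defs.

(* Main.v *)
Require Import Defs.
From mathcomp Require Import all_boot all_order all_algebra.
From mathcomp Require Import ring lra.
Import Order.TTheory GRing.Theory Num.Theory.
Local Open Scope ring_scope.

Lemma sum_g (R : realFieldType) N (x : 'I_N -> R) (A : {set 'I_N}) :
  \sum_(i in A) x i = #|A|%:R * g x A.
Proof.
rewrite /g; have [->|[i hi]] := set_0Vmem A.
  by rewrite big_set0 cards0 mul0r.
have h : #|A| != 0%N by rewrite -lt0n card_gt0; apply/set0Pn; exists i.
by rewrite mulrC divfK // pnatr_eq0.
Qed.

Lemma cover (R : realFieldType) N beta (x : 'I_N -> R) (nu : 'I_beta -> R) (s : 'I_beta) i :
  exists r, i \in Sset x nu r.
Proof.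
case: (@arg_minP _ R _ s predT (fun t => `|x i - nu t|) isT) => r _ H.
by exists r; rewrite inE; apply/forallP => t; exact: H.
Qed.

Lemma count_out (R : realFieldType) N beta (x : 'I_N -> R) (lab : 'I_N -> 'I_beta)
  (nu : 'I_beta -> R) (s : 'I_beta) :
  (#|Tset lab s| <= #|Tset lab s :&: Sset x nu s|
     + \sum_(r | r != s) #|Tset lab s :&: Sset x nu r|)%N.
Proof.
rewrite -{1}(cardsID (Sset x nu s) (Tset lab s)) leq_add2l.
rewrite -sum1_card.
apply: (@leq_trans (\sum_(i in Tset lab s :\: Sset x nu s)
     \sum_(r | r != s) nat_of_bool (i \in Sset x nu r))).
  apply: leq_sum => i; rewrite inE => /andP [hi _].
  have [r hr] := @cover R N beta x nu s i.
  have rs : r != s by apply: contraNneq hi => <-.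
  by rewrite (bigD1 r) //= hr.
rewrite exchange_big /=; apply: leq_sum => r _.
rewrite -big_mkcondr /= sum1dep_card; apply: subset_leq_card.
by apply/subsetP => i; rewrite !inE => /andP [/andP [_ ->] ->].
Qed.

Theorem lemma10 (R : realFieldType) (N beta : nat)
  (x : 'I_N -> R) (lab : 'I_N -> 'I_beta) (mu nu : 'I_beta -> R) (s : 'I_beta)
  (Hmu : injective mu)
  (HS : Sset x nu s != set0)
  (Hns : (0 < #|Tset lab s|)%N)
  (Hgamma : gamma mu nu < 1 / 4)
  (Ha : rho_in x lab nu s + rho_out x lab nu s < 1 / 2)
  (Hb : forall r, r != s -> Sset x nu s :&: Tset lab r != set0 ->
        `|g x (Sset x nu s :&: Tset lab r) - mu r|
          >= (1 - 4 * gamma mu nu) * `|g x (Sset x nu s :&: Tset lab r) - mu s|) :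
  `|g x (Sset x nu s) - mu s|
    <= 2 * (1 - rho_out x lab nu s) * `|g x (Sset x nu s :&: Tset lab s) - mu s|
       + 2 / (1 - 4 * gamma mu nu) *
         \sum_(r | r != s) rho_in_r x lab nu s r
                             * `|g x (Sset x nu s :&: Tset lab r) - mu r|.
Proof.
set S := Sset x nu s.
set G := gamma mu nu.
set k := 1 - 4 * G.
have k0 : 0 < k.
  rewrite /k /G; lra.
set n := (#|Tset lab s|%:R : R).
have n0 : 0 < n :> R by rewrite ltr0n.
have Hcard : #|S| = (\sum_r #|S :&: Tset lab r|)%N.
  rewrite -[#|S|]sum1_card (partition_big lab predT) //=.
  apply: eq_bigr => r _; rewrite -sum1_card. apply: eq_bigl => i.
  by rewrite in_setI /Tset inE in_set.
have Hsum : \sum_(i in S) x i = \sum_r \sum_(i in S :&: Tset lab r) x i.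
  rewrite (partition_big lab predT) //=.
  apply: eq_bigr => r _; apply: eq_bigl => i.
  by rewrite in_setI /Tset inE in_set.
have key : #|S|%:R * (g x S - mu s)
    = \sum_r #|S :&: Tset lab r|%:R * (g x (S :&: Tset lab r) - mu s).
  rewrite mulrBr -sum_g Hsum Hcard natr_sum mulr_suml -sumrB.
  by apply: eq_bigr => r _; rewrite mulrBr -sum_g.
set P := \sum_(r | r != s) #|S :&: Tset lab r|%:R * `|g x (S :&: Tset lab r) - mu r|.
set D := `|g x (S :&: Tset lab s) - mu s|.
set a := `|g x S - mu s|.
set cs := #|S :&: Tset lab s|%:R : R.
set cS := #|S|%:R : R.
have E : cS * a <= cs * D + P / k.
  rewrite /a /cS -normr_nat -normrM key (bigD1 s) //=.
  apply: le_trans (ler_normD _ _) _.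
  rewrite normrM normr_nat lerD //.
  rewrite /P mulr_suml; apply: le_trans (ler_norm_sum _ _ _) _.
  apply: ler_sum => r rs.
  have [->|ne] := eqVneq (S :&: Tset lab r) set0.
    by rewrite cards0 !mul0r normr0.
  rewrite normrM normr_nat -mulrA.
  apply: ler_wpM2l => //.
  by rewrite ler_pdivlMr // mulrC; apply: Hb.
have P0 : 0 <= P by apply: sumr_ge0 => r _; rewrite mulr_ge0.
have D0 : 0 <= D by apply: normr_ge0.
have a0 : 0 <= a by apply: normr_ge0.
set O := (\sum_(r | r != s) #|Tset lab s :&: Sset x nu r|)%:R : R.
have Hro : rho_out x lab nu s = O / n by [].
have Hri0 : 0 <= rho_in x lab nu s.
  by apply: sumr_ge0 => r _; rewrite /rho_in_r divr_ge0.
have HO : O / n < 1 / 2 by rewrite -Hro; lra.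
have HO' : 2 * O < n.
  by move: HO; rewrite ltr_pdivrMr // => h; lra.
have Hcnt : n <= cs + O.
  rewrite /n /cs /O -natrD ler_nat setIC; exact: count_out.
have HcS : cs <= cS by rewrite ler_nat; apply: subset_leq_card; apply: subsetIl.
have HP : \sum_(r | r != s) rho_in_r x lab nu s r * `|g x (S :&: Tset lab r) - mu r| = P / n.
  rewrite /P mulr_suml; apply: eq_bigr => r _.
  by rewrite /rho_in_r [Tset lab r :&: _]setIC mulrAC.
rewrite HP Hro -/D -/a.
have -> : 2 * (1 - O / n) * D + 2 / k * (P / n) = (2 * (n - O) * D + 2 * (P / k)) / n.
  by field; apply/andP; split; rewrite gt_eqF.
rewrite ler_pdivlMr //.
have Q0 : 0 <= P / k by rewrite divr_ge0 // ltW.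
set Q := P / k in E Q0 *.
have [aD|Da] := leP a D; nra.
Qed.
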